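(* Let $n\ge 1$ be an integer and let $A_1,A_2,A_4>0$ be constants. For each $\alpha$ in some interval $(0,\alpha_0)$ let $u^\alpha,\bar u^\alpha:\mathbb{R}\to\mathbb{R}$ be functions with $u^\alpha\in C^1(\mathbb{R})$ and $\bar u^\alpha\in C^{2n}(\mathbb{R})$ satisfying $$|u^\alpha|<A_1,\quad |\bar u^\alpha|<A_1,\qquad \int_{\mathbb{R}}|u^\alpha_x|\,dx<A_2,\quad \int_{\mathbb{R}}|\bar u^\alpha_x|\,dx<A_2,$$ $$\left\|\frac{\partial^j}{\partial x^j}\bar u^\alpha\right\|_{L^\infty}<\frac{A_4}{\alpha^j}\qquad\text{for } 1\le j\le 2n-1.$$ Let $f\in C^\infty(\mathbb{R})$ have compact support. Then $$\lim_{\alpha\to 0}\ \alpha^{2n}\int_{-\infty}^{\infty}\left(\frac{\partial^{2n}}{\partial x^{2n}}\bar u^\alpha\right)\bar u^\alpha_x\, f\,dx=0.$$ *)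

(* Defs.v *)
From HB Require Import structures.
From mathcomp Require Import all_boot all_order all_algebra.
From mathcomp Require Import all_classical all_reals all_analysis.
Set Implicit Arguments. Unset Strict Implicit. Unset Printing Implicit Defensive.
Import Order.TTheory GRing.Theory Num.Theory.
Import numFieldNormedType.Exports.
Local Open Scope classical_set_scope.
Local Open Scope ring_scope.

Definition Ck {R : realType} (k : nat) (f : R -> R) : Prop :=
  (forall j, (j < k)%N -> forall x : R, derivable (derive1n j f) x 1) /\
  continuous (derive1n k f).

Definition Cinf {R : realType} (f : R -> R) : Prop :=
  forall (j : nat) (x : R), derivable (derive1n j f) x 1.

Definition compact_supp {R : realType} (f : R -> R) : Prop :=
  exists M : R, forall x : R, M < `|x| -> f x = 0.

(* sup-norm (= L^infty norm for continuous g) strictly below c. *)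
Definition sup_norm_lt {R : realType} (g : R -> R) (c : R) : Prop :=
  exists b : R, b < c /\ forall x : R, `|g x| <= b.

(* Main.v *)
Require Import Defs.
From HB Require Import structures.
From mathcomp Require Import all_boot all_order all_algebra.
From mathcomp Require Import all_classical all_reals all_analysis.
Import Order.TTheory GRing.Theory Num.Theory.
Import numFieldNormedType.Exports.
Local Open Scope classical_set_scope.
Local Open Scope ring_scope.
From mathcomp Require Import measurable_realfun zify ring lra.
Set Implicit Arguments. Unset Strict Implicit.
Lemma derive1nSr (R : realType) (g : R -> R) j :
  derive1n j.+1 g = derive1n j (derive1 g).
Proof. by rewrite /derive1n iterSr. Qed.

Lemma derivable_cont (R : realType) (g : R -> R) :
  (forall x, derivable g x 1) -> continuous g.
Proof.
by move=> dg x; apply/differentiable_continuous; rewrite -derivable1_diffP.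
Qed.

Lemma cont_supp_bound (R : realType) (g : R -> R) (M : R) :
  continuous g -> (forall x, M <= `|x| -> g x = 0) ->
  exists G, 0 <= G /\ forall x, `|g x| <= G.
Proof.
move=> cg sg.
have /compact_bounded[G [_ mrt]] :=
  continuous_compact (continuous_subspaceT cg) (@segment_compact _ (-M) M).
exists (`|G| + 1); split; first by rewrite addr_ge0.
move=> x; have [xM|xM] := leP M `|x|.
  by rewrite sg // normr0 addr_ge0.
apply: mrt; first by rewrite (le_lt_trans (ler_norm G)) // ltrDl.
exists x => //=; rewrite in_itv /= -ler_norml; exact: ltW.
Qed.

Lemma locally_zero_deriv (R : realType) (g : R -> R) (M : R) x :
  (forall y, M < `|y| -> g y = 0) -> M + 1 <= `|x| -> derive1 g x = 0.
Proof.
move=> sg xM.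
rewrite derive1E (@near_eq_derive _ _ _ g (cst 0)); last first.
  exists 1 => //= y /= xy; apply: sg.
  rewrite -(ltrD2r 1) (le_lt_trans xM) //.
  have h : `|x| <= `|y| + `|x - y|.
    by rewrite -{1}(subrKC y x) (ler_normD).
  by rewrite (le_lt_trans h) // ltrD2l.
by rewrite derive_cst.
Qed.
Lemma contM (R : realType) (f g : R -> R) : continuous f -> continuous g ->
  continuous (fun x => f x * g x).
Proof. move=> cf cg x; exact: (continuousM (cf x) (cg x)). Qed.
Lemma contD (R : realType) (f g : R -> R) : continuous f -> continuous g ->
  continuous (fun x => f x + g x).
Proof. move=> cf cg x; exact: (continuousD (cf x) (cg x)). Qed.

Definition test (R : realType) (g : R -> R) :=
  (forall j x, derivable (derive1n j g) x 1) /\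
  exists M : R, 0 < M /\ forall x, M <= `|x| -> g x = 0.

Lemma test_of (R : realType) (f : R -> R) : Cinf f -> compact_supp f -> test f.
Proof.
move=> cf [M hM]; split => //; exists (`|M| + 1); split.
  by rewrite ltr_pwDr // normr_ge0.
move=> x xM; apply: hM; rewrite (le_lt_trans (ler_norm M)) //.
by rewrite (lt_le_trans _ xM) // ltrDl.
Qed.

Lemma test_D (R : realType) (g : R -> R) : test g -> test (derive1 g).
Proof.
move=> [dg [M [M0 sg]]]; split.
  by move=> j x; rewrite -derive1nSr.
exists (M + 1); split; first by rewrite addr_gt0.
move=> x xM; apply: (@locally_zero_deriv _ _ M) => // y /ltW; exact: sg.
Qed.

Lemma test_cont (R : realType) (g : R -> R) : test g -> continuous g.
Proof. by move=> [dg _]; apply: derivable_cont => x; exact: (dg 0%N x). Qed.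

Lemma Rint_supp (R : realType) (F : R -> R) (M : R) :
  (forall x, M <= `|x| -> F x = 0) ->
  Rintegral (@lebesgue_measure R) setT F =
  Rintegral (@lebesgue_measure R) `[-M, M] F.
Proof.
move=> sF; rewrite [RHS]Rintegral_mkcond; apply: eq_Rintegral => x _.
rewrite patchE; case: ifPn => // /negP xM; rewrite sF //.
apply/ltW; rewrite ltNge; apply/negP => h; apply: xM.
by rewrite inE /= in_itv /= -ler_norml.
Qed.

Lemma cont_int (R : realType) (F : R -> R) (a b : R) : continuous F ->
  (@lebesgue_measure R).-integrable `[a, b] (EFin \o F).
Proof.
move=> cF; apply: continuous_compact_integrable.
  exact: (@segment_compact _ a b).
exact: continuous_subspaceT.
Qed.

Lemma LRcont (R : realType) (F : R -> R) a b :
  (forall x, derivable F x 1) -> derivable_oo_LRcontinuous F a b.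
Proof.
move=> dF; have cF := derivable_cont dF; split.
- by move=> x _; exact: dF.
- exact/cvg_at_right_filter/cF.
- exact/cvg_at_left_filter/cF.
Qed.

Lemma ibp (R : realType) (h k g : R -> R) (M : R) : 0 < M ->
  (forall x, M <= `|x| -> g x = 0) ->
  (forall x, M <= `|x| -> derive1 g x = 0) ->
  (forall x, derivable h x 1) -> (forall x, derivable k x 1) ->
  (forall x, derivable g x 1) ->
  continuous (derive1 h) -> continuous (derive1 k) -> continuous (derive1 g) ->
  Rintegral (@lebesgue_measure R) setT (fun x => derive1 h x * k x * g x) =
  - Rintegral (@lebesgue_measure R) setT (fun x => h x * derive1 k x * g x)
  - Rintegral (@lebesgue_measure R) setT (fun x => h x * k x * derive1 g x).
Proof.
move=> M0 sg sg' dh dk dg ch' ck' cg'.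
have ch := derivable_cont dh; have ck := derivable_cont dk.
have cg := derivable_cont dg.
rewrite !(Rint_supp (M := M)); last 3 first.
- by move=> x /sg' ->; rewrite mulr0.
- by move=> x /sg ->; rewrite mulr0.
- by move=> x /sg ->; rewrite mulr0.
have Fd : forall x, derivable (k * g) x 1.
  by move=> x; apply: derivableM.
have Fder : forall x, derive1 (k * g) x = derive1 k x * g x + k x * derive1 g x.
  move=> x; rewrite derive1E deriveM // -!derive1E.
  by rewrite /GRing.scale /= addrC mulrC.
have cf : continuous (fun x => derive1 k x * g x + k x * derive1 g x).
  by apply: contD; apply: contM.
have Mlt : -M < M by rewrite gtrN.
have := @Rintegration_by_parts R (k * g) h
  (fun x => derive1 k x * g x + k x * derive1 g x) (derive1 h) (-M) M Mlt
  (continuous_subspaceT cf) (LRcont _ _ Fd) (fun x _ => Fder x)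
  (continuous_subspaceT ch') (LRcont _ _ dh) (fun x _ => erefl).
have -> : (k * g) M = k M * g M by [].
have -> : (k * g) (- M) = k (- M) * g (- M) by [].
rewrite sg ?sg ?normrN ?gtr0_norm // !mulr0 !mul0r subr0 sub0r.
move=> E.
transitivity (Rintegral (@lebesgue_measure R) `[- M, M]
  (fun x => (k * g) x * derive1 h x)).
  by apply: eq_Rintegral => x _; rewrite -[(k * g) x]/(k x * g x) [RHS]mulrC mulrA.
apply: etrans; first exact: E.
under eq_Rintegral do rewrite mulrDl.
rewrite RintegralD //; last 2 first.
- by apply: cont_int; apply: contM => //; apply: contM.
- by apply: cont_int; apply: contM => //; apply: contM.
rewrite opprD; congr (- _ - _); by apply: eq_Rintegral => x _; rewrite [LHS]mulrC mulrA.
Qed.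

Lemma contN (R : realType) (f : R -> R) : continuous f ->
  continuous (fun x => `|f x|).
Proof.
move=> cf x; exact: (continuous_comp (cf x) (@norm_continuous _ _ (f x))).
Qed.

Lemma L1_sub (R : realType) (F : R -> R) (M A2 : R) : continuous F ->
  (\int[@lebesgue_measure R]_(x in setT) `|F x|%:E < A2%:E)%E ->
  Rintegral (@lebesgue_measure R) `[-M, M] (fun x => `|F x|) <= A2.
Proof.
move=> cF hA.
have mF : measurable_fun [set: R] (fun x : R => ((`|F x|)%:E : \bar R))
  by apply/measurable_EFinP; apply: continuous_measurable_fun; apply: contN.
have hI := @ge0_subset_integral _ _ _ (@lebesgue_measure R) `[-M, M] setT
  (measurable_itv _) measurableT _ mF (fun x _ => normr_ge0 _) (@subsetT _ _).
have h0 := @integral_ge0 _ _ _ (@lebesgue_measure R) `[-M, M]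
  (fun x => (`|F x|)%:E) (fun x _ => normr_ge0 _).
have := lt_le_trans (le_lt_trans h0 (le_lt_trans hI hA)) (lexx _) => A0.
rewrite /Rintegral; move: h0 hI.
case: (\int[_]_(x in _) _)%E => [r||] //= _.
- by move=> h; rewrite -lee_fin (le_trans h) // ltW.
- by move=> h; have := le_lt_trans h hA; rewrite ltNge leey.
Qed.

Lemma base_bound (R : realType) (V W g : R -> R) (M c G A2 : R) : 0 < M ->
  (forall x, M <= `|x| -> g x = 0) -> (forall x, `|g x| <= G) ->
  continuous V -> continuous W -> continuous g -> (forall x, `|W x| <= c) ->
  (\int[@lebesgue_measure R]_(x in setT) `|V x|%:E < A2%:E)%E ->
  `|Rintegral (@lebesgue_measure R) setT (fun x => V x * W x * g x)| <= c * G * A2.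
Proof.
move=> M0 sg bg cV cW cg bW hA.
rewrite (Rint_supp (M := M)); last by move=> x /sg ->; rewrite mulr0.
have c0 : 0 <= c by apply: le_trans (bW 0).
have G0 : 0 <= G by apply: le_trans (bg 0).
have cP : continuous (fun x => V x * W x * g x) by apply: contM => //; apply: contM.
apply: le_trans; first (apply: le_normr_Rintegral => //; exact: cont_int).
apply: (@le_trans _ _ (Rintegral (@lebesgue_measure R) `[-M, M]
   (fun x => (c * G) * `|V x|))).
  apply: le_Rintegral => //.
  - exact: cont_int _ _ (contN cP).
  - by apply: cont_int; apply: contM => //; [exact: cst_continuous|exact: contN].
  move=> x _; rewrite !normrM [X in _ <= X]mulrC -mulrA.
  by apply: ler_wpM2l => //; apply: ler_pM.
rewrite RintegralZl //; last exact: cont_int _ _ (contN cV).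
by apply: ler_wpM2l; [exact: mulr_ge0|exact: L1_sub].
Qed.

Lemma test_supp2 (R : realType) (g : R -> R) : test g ->
  exists M : R, 0 < M /\ (forall x, M <= `|x| -> g x = 0) /\
                (forall x, M <= `|x| -> derive1 g x = 0).
Proof.
move=> tg; have [_ [M [M0 sM]]] := tg.
have [_ [M' [M'0 sM']]] := test_D tg.
exists (M + M'); split; first exact: addr_gt0.
split => x xM.
- by apply: sM; rewrite (le_trans _ xM) // lerDl ltW.
- by apply: sM'; rewrite (le_trans _ xM) // lerDr ltW.
Qed.

Lemma contn (R : realType) (V : R -> R) (N j : nat) :
  (forall j, (j < N)%N -> forall x, derivable (derive1n j V) x 1) ->
  continuous (derive1n N V) -> (j <= N)%N -> continuous (derive1n j V).
Proof.
move=> dV cV; rewrite leq_eqVlt => /orP[/eqP -> //|jN].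
by apply: derivable_cont; apply: dV.
Qed.

Definition TT (R : realType) (V g : R -> R) (p q : nat) :=
  Rintegral (@lebesgue_measure R) setT
    (fun x => derive1n p V x * derive1n q V x * g x).

Lemma T_step (R : realType) (V g : R -> R) (N p q : nat) :
  (forall j, (j < N)%N -> forall x, derivable (derive1n j V) x 1) ->
  continuous (derive1n N V) -> test g -> (p.+1 <= N)%N -> (q.+1 <= N)%N ->
  TT V g p.+1 q = - TT V g p q.+1 - TT V (derive1 g) p q.
Proof.
move=> dV cV tg pN qN.
have [M [M0 [sg sg']]] := test_supp2 tg.
rewrite /TT !derive1nS.
apply: (ibp (M := M)) => //.
- by move=> x; apply: dV.
- by move=> x; apply: dV.
- by move=> x; have [dg _] := tg; exact: (dg 0%N x).
- by rewrite -derive1nS; apply: (contn dV cV).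
- by rewrite -derive1nS; apply: (contn dV cV).
- exact: test_cont (test_D tg).
Qed.

Definition goodU (R : realType) (N : nat) (A2 A4 a : R) (V : R -> R) :=
  (forall j, (j < N)%N -> forall x, derivable (derive1n j V) x 1) /\
  continuous (derive1n N V) /\
  (\int[@lebesgue_measure R]_(x in setT) `|derive1 V x|%:E < A2%:E)%E /\
  (forall j, (1 <= j <= N.-1)%N -> forall x, `|derive1n j V x| <= A4 / a ^+ j).

Lemma bound (R : realType) (U : R -> R -> R) (N : nat) (a0 A2 A4 : R) :
  (forall a, 0 < a < a0 -> goodU N A2 A4 a (U a)) -> 0 < a0 ->
  forall p q g, test g -> (0 < p)%N -> (0 < q)%N -> (p + q <= N)%N ->
  exists K, forall a, 0 < a < a0 -> a ^+ (p + q).-1 * `|TT (U a) g p q| <= K.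
Proof.
move=> HU a00 p; elim: p => [//|p IH] q g tg _ q0 pqN.
case: p IH pqN => [|p] IH pqN.
  have [_ [M [M0 sM]]] := tg.
  have [G [G0 bG]] := cont_supp_bound (test_cont tg) sM.
  exists (A4 * G * A2) => a /[dup] ha /andP[apos aa0].
  have [dV [cV [hA bd]]] := HU a ha.
  rewrite /TT derive1n1 add1n /=.
  have := @base_bound R (derive1 (U a)) (derive1n q (U a)) g M (A4 / a ^+ q) G A2
    M0 sM bG (contn (j := 1) dV cV _) (contn dV cV _) (test_cont tg) (bd q _) hA.
  move=> /(_ _ _ _) h.
  have h' := h ltac:(lia) ltac:(lia) ltac:(lia).
  have an0 : a ^+ q != 0 by rewrite expf_neq0 // gt_eqF.
  apply: le_trans (ler_wpM2l (exprn_ge0 _ (ltW apos)) h') _.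
  by rewrite !mulrA [a ^+ q * A4]mulrC mulfK.
have [K1 h1] := IH q.+1 g tg erefl erefl ltac:(lia).
have [K2 h2] := IH q (derive1 g) (test_D tg) erefl q0 ltac:(lia).
exists (K1 + a0 * `|K2|) => a /[dup] ha /andP[apos aa0].
have [dV [cV _]] := HU a ha.
rewrite (T_step dV cV tg); [|lia|lia].
have -> : (p.+2 + q).-1 = ((p.+1 + q).-1).+1 by rewrite !addSn.
have e1 : ((p.+1 + q).-1).+1 = (p.+1 + q.+1).-1 by rewrite addnS addSn.
apply: le_trans (ler_wpM2l (exprn_ge0 _ (ltW apos)) (ler_normB _ _)) _.
rewrite normrN mulrDr; apply: lerD; first by rewrite e1; exact: h1.
rewrite exprS -mulrA; apply: ler_pM.
- exact: ltW apos.
- by apply: mulr_ge0 => //; exact: exprn_ge0 (ltW apos).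
- exact: ltW aa0.
- by apply: le_trans (h2 a ha) (ler_norm _).
Qed.

Lemma TT_sym (R : realType) (V g : R -> R) p q : TT V g p q = TT V g q p.
Proof. by apply: eq_Rintegral => x _; rewrite [_ * derive1n q V x]mulrC. Qed.

Lemma chain (R : realType) (U : R -> R -> R) (n : nat) (a0 A2 A4 : R) :
  (1 <= n)%N ->
  (forall a, 0 < a < a0 -> goodU (2 * n) A2 A4 a (U a)) -> 0 < a0 ->
  forall j, (j < n)%N -> forall g, test g ->
  exists K, forall a, 0 < a < a0 ->
    `|a ^+ (2 * n) * TT (U a) g (n.+1 + j) (n - j)| <= K * a.
Proof.
move=> n1 HU a00; elim => [|j IH] jn g tg.
  have [K2 h2] := bound HU a00 (test_D tg) n1 n1 ltac:(lia).
  exists `|K2| => a /[dup] ha /andP[apos aa0].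
  have [dV [cV _]] := HU a ha.
  have E := T_step dV cV tg (p := n) (q := n) ltac:(lia) ltac:(lia).
  rewrite [TT _ g n n.+1]TT_sym in E.
  have E2 : TT (U a) g n.+1 n = - (TT (U a) (derive1 g) n n) / 2.
    by move: E; lra.
  rewrite addn0 subn0 E2.
  have -> : (2 * n = ((n + n).-1).+1)%N by lia.
  have h := h2 a ha.
  rewrite exprS -mulrA normrM (ger0_norm (ltW apos)) mulrC.
  apply: ler_wpM2r; first exact: ltW.
  rewrite normrM normrM normrN normfV ger0_norm ?exprn_ge0 ?(ltW apos) //.
  rewrite normr_nat.
  have Y0 : 0 <= a ^+ (n + n).-1 * `|TT (U a) (derive1 g) n n|.
    by apply: mulr_ge0; [exact: exprn_ge0 (ltW apos)|exact: normr_ge0].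
  have := ler_norm K2.
  move: Y0 h; rewrite mulrA; lra.
have [K1 h1] := IH ltac:(lia) g tg.
have [K2 h2] := bound HU a00 (test_D tg) (p := n.+1 + j) (q := n - j.+1)
  ltac:(lia) ltac:(lia) ltac:(lia).
exists (K1 + `|K2|) => a /[dup] ha /andP[apos aa0].
have [dV [cV _]] := HU a ha.
have E := T_step dV cV tg (p := n.+1 + j) (q := n - j.+1) ltac:(lia) ltac:(lia).
have -> : (n.+1 + j.+1 = (n.+1 + j).+1)%N by lia.
rewrite E.
have -> : ((n - j.+1).+1 = n - j)%N by lia.
have h := h2 a ha; have h' := h1 a ha.
rewrite mulrDr !mulrN; apply: le_trans (ler_normB _ _) _.
rewrite normrN mulrDl; apply: lerD => //.
have -> : (2 * n = ((n.+1 + j + (n - j.+1)).-1).+1)%N by lia.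
rewrite exprS -mulrA normrM (ger0_norm (ltW apos)) mulrC.
apply: ler_wpM2r; first exact: ltW.
rewrite normrM ger0_norm ?exprn_ge0 ?(ltW apos) //.
exact: le_trans h (ler_norm _).
Qed.

Unset Implicit Arguments.

Theorem lemma2 (R : realType) (n : nat) (A1 A2 A4 alpha0 : R)
  (u ubar : R -> R -> R) (f : R -> R) :
  (1 <= n)%N -> 0 < A1 -> 0 < A2 -> 0 < A4 -> 0 < alpha0 ->
  (forall a : R, 0 < a < alpha0 ->
     Ck 1 (u a) /\ Ck (2 * n) (ubar a) /\
         (forall x, `|u a x| < A1) /\ (forall x, `|ubar a x| < A1) /\
         (\int[@lebesgue_measure R]_(x in setT) `|derive1 (u a) x|%:E < A2%:E)%E /\
         (\int[@lebesgue_measure R]_(x in setT) `|derive1 (ubar a) x|%:E < A2%:E)%E /\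
       (forall j : nat, (1 <= j <= (2 * n).-1)%N ->
           sup_norm_lt (derive1n j (ubar a)) (A4 / a ^+ j))) ->
  Cinf f -> compact_supp f ->
  (fun a : R => a ^+ (2 * n) *
     Rintegral (@lebesgue_measure R) setT
       (fun x => derive1n (2 * n) (ubar a) x * derive1 (ubar a) x * f x))
    @ 0^'+ --> (0 : R).
Proof.
move=> n1 _ _ _ a00 H cf sf.
have HU : forall a, 0 < a < alpha0 -> goodU (2 * n) A2 A4 a (ubar a).
  move=> a ha; have [_ [[dU cU] [_ [_ [_ [hA hs]]]]]] := H a ha.
  split => //; split => //; split => // j hj x.
  have [b [bc hb]] := hs j hj.
  exact: le_trans (hb x) (ltW bc).
have [K hK] := chain n1 HU a00 (j := n.-1) ltac:(lia) (test_of cf sf).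
have E1 : (n.+1 + n.-1 = 2 * n)%N by lia.
have E2 : (n - n.-1 = 1)%N by lia.
apply/cvgrPdist_lt => e e0.
near=> a.
have ha : 0 < a < alpha0 by apply/andP; split; near: a;
  [exact: nbhs_right_gt|exact: nbhs_right_lt].
have := hK a ha; rewrite E1 E2 => h.
rewrite sub0r normrN.
apply: le_lt_trans h _.
have aK : a < e / (`|K| + 1).
  near: a; apply: nbhs_right_lt; apply: divr_gt0 => //.
have apos : 0 < a by case/andP: ha.
apply: (@le_lt_trans _ _ (`|K| * a)).
  by apply: ler_wpM2r; [exact: ltW|exact: ler_norm].
have K1 : 0 < `|K| + 1 := ltr_wpDl (normr_ge0 K) ltr01.
rewrite ltr_pdivlMr // in aK.
have := normr_ge0 K; move: aK apos; nra.
Unshelve. all: by end_near.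
Qed.
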